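(* Let $p\in(0,1/16)$, let $m,n$ be positive integers, and let $D_{mn}(p)=\{q\in(0,1/16):\ \tfrac{15}{16}\le\tfrac{q^n}{p^m}\le\tfrac{16}{15}\}$. Fix $i,j\in\{3,4\}$ and for $q\in(0,1/16)$ and $\sigma,\tau\in I^\infty$ put $\varphi_1(q,\sigma)=S_1^mS_i\pi_{pq}(\sigma)$ and $\varphi_2(q,\tau)=S_2^nS_j\pi_{pq}(\tau)$, where the maps $S_2,S_4$ are those with parameter $q$. Then for all $\sigma,\tau\in I^\infty$ and all $q,q'\in D_{mn}(p)$ with $q\neq q'$, $$|\varphi_1(q,\sigma)-\varphi_2(q,\tau)-\varphi_1(q',\sigma)+\varphi_2(q',\tau)|>11\,p^m|q'-q|.$$
   Context: For $p,q\in(0,1/2)$ let $S_1(x)=px$, $S_2(x)=qx$, $S_3(x)=px+1-p$, $S_4(x)=qx+1-q$, and let $K_{pq}$ be the attractor of $\{S_1,S_2,S_3,S_4\}$ (the unique nonempty compact $K\subset\mathbb R$ with $K=\bigcup_{i=1}^4S_i(K)$). $I=\{1,2,3,4\}$, $I^\infty$ is the set of infinite sequences over $I$, and $\pi_{pq}:I^\infty\to K_{pq}$ sends $\sigma=\sigma_1\sigma_2\dots$ to the unique point of $\bigcap_{k\ge1}S_{\sigma_1}\circ\cdots\circ S_{\sigma_k}(K_{pq})$. *)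

(* Defs.v *)
From HB Require Import structures.
From mathcomp Require Import all_boot all_order all_algebra.
From mathcomp Require Import all_classical all_reals all_analysis.
Import numFieldNormedType.Exports.
Set Implicit Arguments. Unset Strict Implicit. Unset Printing Implicit Defensive.
Import Order.TTheory GRing.Theory Num.Theory.
Local Open Scope classical_set_scope.
Local Open Scope ring_scope.

Inductive I4 := s1 | s2 | s3 | s4.

Section IFS.
Variable R : realType.

Definition S (p q : R) (k : I4) (x : R) : R :=
  match k with
  | s1 => p * x
  | s2 => q * x
  | s3 => p * x + 1 - p
  | s4 => q * x + 1 - q
  end.

Definition is_attractor (p q : R) (K : set R) : Prop :=
  compact K /\ K !=set0 /\
  K = S p q s1 @` K `|` S p q s2 @` K `|` S p q s3 @` K `|` S p q s4 @` K.

Definition Kpq (p q : R) : set R := xget set0 (is_attractor p q).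

(* Scomp sigma k x = S_{sigma_1} o ... o S_{sigma_k} (x)  (sigma is 0-indexed). *)
Fixpoint Scomp (p q : R) (sigma : nat -> I4) (k : nat) (x : R) : R :=
  match k with
  | 0 => x
  | k'.+1 => Scomp p q sigma k' (S p q (sigma k') x)
  end.

Definition pi_pq (p q : R) (sigma : nat -> I4) : R :=
  xget 0 [set x | forall k : nat, (Scomp p q sigma k @` Kpq p q) x].

Definition Dmn (m n : nat) (p : R) : set R :=
  [set q | 0 < q < 1/16 /\ 15/16 <= q ^+ n / p ^+ m <= 16/15].

Definition phi1 (p : R) (m : nat) (i : I4) (q : R) (sigma : nat -> I4) : R :=
  iter m (S p q s1) (S p q i (pi_pq p q sigma)).
Definition phi2 (p : R) (n : nat) (j : I4) (q : R) (tau : nat -> I4) : R :=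
  iter n (S p q s2) (S p q j (pi_pq p q tau)).

End IFS.

(* Main.v *)
Require Import Defs.
From HB Require Import structures.
From mathcomp Require Import all_boot all_order all_algebra.
From mathcomp Require Import all_classical all_reals all_analysis.
Import numFieldNormedType.Exports.
Import Order.TTheory GRing.Theory Num.Theory.
Local Open Scope classical_set_scope.
Local Open Scope ring_scope.
From mathcomp Require Import ring lra zify.
Section Work.
Variable R : realType.
Implicit Types (p q x y : R).

Definition rt p q (k : I4) : R := match k with s1 | s3 => p | _ => q end.
Definition tr p q (k : I4) : R :=
  match k with s1 | s2 => 0 | s3 => 1 - p | s4 => 1 - q end.

Lemma SE p q k x : S p q k x = rt p q k * x + tr p q k.
Proof. by case: k => /=; rewrite ?addr0 // addrA. Qed.

Lemma S_cont p q k : continuous (S p q k).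
Proof.
have -> : S p q k = (fun y => rt p q k * y + tr p q k).
  by apply: funext => y; rewrite SE.
move=> x; apply: continuousD; last exact: cst_continuous.
apply: continuousM; [exact: cst_continuous | exact: (fun _ h => h)].
Qed.

Lemma Scomp_cont p q s k : continuous (Scomp p q s k).
Proof.
elim: k => [|k IH] x /=; first exact: (fun _ h => h).
exact: (continuous_comp (S_cont p q (s k) x) (IH _)).
Qed.

Lemma geo_limit (a b C : R) : 0 <= C ->
  (forall k : nat, a <= b + C * (1/16) ^+ k) -> a <= b.
Proof.
move=> C0 H; apply/ler_addgt0Pr => e e0.
pose k := Num.Def.archi_bound (C / e).
have hk : C / e < k%:R by apply: archi_boundP; rewrite divr_ge0 // ltW.
have pk : (1/16 : R) ^+ k * (k%:R + 1) <= 1.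
  elim: (k) => [|j IH]; first by rewrite expr0 mul1r add0r.
  rewrite exprS -mulrA.
  have hj : 0 <= (j%:R : R) by [].
  have hX : 0 <= (1/16 : R) ^+ j * (j%:R + 1) by rewrite mulr_ge0 // ?exprn_ge0 //; lra.
  have h0 : 0 <= (1/16 : R) ^+ j by apply: exprn_ge0; lra.
  have -> : (j.+1%:R : R) = j%:R + 1 by rewrite -natr1.
  nra.
apply: (le_trans (H k)); rewrite lerD2l.
have h0 : 0 <= (1/16 : R) ^+ k by apply: exprn_ge0; lra.
have : C < e * k%:R by rewrite -ltr_pdivrMl // mulrC.
have : 0 <= (k%:R : R) by [].
nra.
Qed.


Lemma nested_inter (C : set R) (F : nat -> set R) : compact C ->
  (forall k, closed (F k)) -> (forall k, F k `<=` C) ->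
  (forall k, F k.+1 `<=` F k) -> (forall k, F k !=set0) ->
  exists x, forall k, F k x.
Proof.
move=> cC clF FC Fdec Fne.
have mono : forall k l, (k <= l)%N -> F l `<=` F k.
  move=> k l /subnK <-; elim: (l - k)%N => // d IH.
  by rewrite addSn; apply: subset_trans (Fdec _) IH.
move: cC; rewrite compact_In0 => /(_ nat setT F) [].
- by exists F => // k _; rewrite setIidr.
- move=> D' _.
  have [x Fx] := Fne (\max_(i <- finmap.enum_fset D') i).
  exists x => i /= iD; apply: (mono i _ _ _ Fx).
  by apply: (@leq_bigmax_seq _ _ predT (fun i => i)).
- by move=> x Hx; exists x => k; exact: Hx k I.
Qed.

Lemma norm_comb (a u b w : R) : `|a| <= 1/16 -> `|w| <= 1 ->
  `|a * u + b * w| <= 1/16 * `|u| + `|b|.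
Proof.
move=> ha hw; apply: (le_trans (ler_normD _ _)); rewrite !normrM.
apply: lerD; first by apply: ler_wpM2r.
by rewrite -[X in _ <= X]mulr1; apply: ler_wpM2l.
Qed.

Lemma Sdiff p q q' k x x' : 0 < p < 1/16 -> 0 < q < 1/16 -> 0 < q' < 1/16 ->
  0 <= x <= 1 -> 0 <= x' <= 1 ->
  `|S p q k x - S p q' k x'| <= 1/16 * `|x - x'| + `|q - q'|.
Proof.
move=> hp hq hq' hx hx'.
have hp1 : `|p| <= 1/16 by rewrite ger0_norm; lra.
have hq1 : `|q| <= 1/16 by rewrite ger0_norm; lra.
have h0 : `|0 : R| <= 1 by rewrite normr0.
have hx1 : `|x'| <= 1 by rewrite ger0_norm; lra.
have hx2 : `|x' - 1| <= 1 by rewrite ler0_norm; lra.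
case: k => /=.
- have -> : p * x - p * x' = p * (x - x') + (q - q') * 0 by ring.
  exact: norm_comb.
- have -> : q * x - q' * x' = q * (x - x') + (q - q') * x' by ring.
  exact: norm_comb.
- have -> : p * x + 1 - p - (p * x' + 1 - p) = p * (x - x') + (q - q') * 0 by ring.
  exact: norm_comb.
- have -> : q * x + 1 - q - (q' * x' + 1 - q') = q * (x - x') + (q - q') * (x' - 1) by ring.
  exact: norm_comb.
Qed.

Lemma S01 p q k x : 0 < p < 1/16 -> 0 < q < 1/16 -> 0 <= x <= 1 ->
  0 <= S p q k x <= 1.
Proof. move=> hp hq hx; case: k => /=; nra. Qed.

Lemma S_inj p q k : 0 < p -> 0 < q -> injective (S p q k).
Proof.
move=> hp hq x y; rewrite !SE => /addIr /mulfI; apply.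
by case: k => /=; rewrite gt_eqF.
Qed.

Lemma S_gt p q k x : 0 < p < 1/16 -> 0 < q < 1/16 -> 0 <= x <= 1 ->
  (k = s3 \/ k = s4) -> 15/16 <= S p q k x.
Proof. by move=> hp hq hx [] -> /=; nra. Qed.

Lemma itv01 (x : R) : `[(0:R), 1]%classic x <-> 0 <= x <= 1.
Proof. by rewrite /= in_itv. Qed.

Lemma S_bd p q k y E : 0 < p < 1/16 -> 0 < q < 1/16 -> 0 <= E ->
  y <= 1 + E -> - E <= y -> S p q k y <= 1 + E / 16 /\ - (E / 16) <= S p q k y.
Proof. by move=> hp hq hE h1 h2; case: k => /=; split; nra. Qed.

Lemma attr_bound p q K : 0 < p < 1/16 -> 0 < q < 1/16 -> is_attractor p q K ->
  forall x, K x -> 0 <= x <= 1.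
Proof.
move=> hp hq [cK [_ eK]].
have [M [_ HM]] := compact_bounded cK.
have hB : forall x, K x -> `|x| <= `|M| + 1.
  move=> x Kx; apply: (HM (`|M| + 1)) => //.
  by apply: (le_lt_trans (ler_norm M)); rewrite ltrDl.
set B := `|M| + 1.
have B0 : 0 <= B by rewrite /B; apply: addr_ge0.
have cl : forall k x, K x -> x <= 1 + (1/16) ^+ k * B /\ - ((1/16) ^+ k * B) <= x.
  elim=> [|k IH] x Kx.
    by rewrite expr0 mul1r; move: (hB x Kx); rewrite ler_norml /B => /andP[]; lra.
  have E0 : 0 <= (1/16 : R) ^+ k * B by rewrite mulr_ge0 // exprn_ge0 //; lra.
  have -> : (1/16 : R) ^+ k.+1 * B = (1/16) ^+ k * B / 16.
    by rewrite exprS; field.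
  move: Kx; rewrite eK => -[[[|]|]|] [y Ky <-];
  by have [h1 h2] := IH y Ky; apply: S_bd.
move=> x Kx; apply/andP; split.
- rewrite -oppr_le0; apply: (@geo_limit (-x) 0 B B0) => k.
  by have [_ h] := cl k x Kx; rewrite mulrC; lra.
- apply: (@geo_limit x 1 B B0) => k.
  by have [h _] := cl k x Kx; rewrite mulrC; lra.
Qed.

Definition U p q (A : set R) :=
  S p q s1 @` A `|` S p q s2 @` A `|` S p q s3 @` A `|` S p q s4 @` A.

Fixpoint F0 p q k : set R :=
  match k with 0 => `[(0:R), 1]%classic | k'.+1 => U p q (F0 p q k') end.

Lemma U_mono p q (A B : set R) : A `<=` B -> U p q A `<=` U p q B.
Proof.
move=> AB x [[[|]|]|] [y Ay <-].
- by left; left; left; exists y => //; apply: AB.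
- by left; left; right; exists y => //; apply: AB.
- by left; right; exists y => //; apply: AB.
- by right; exists y => //; apply: AB.
Qed.

Lemma F0_dec p q k : 0 < p < 1/16 -> 0 < q < 1/16 -> F0 p q k.+1 `<=` F0 p q k.
Proof.
move=> hp hq; elim: k => [|k IH]; last exact: U_mono.
by move=> x [[[|]|]|] [y /itv01 Ay <-]; apply/itv01; apply: S01.
Qed.

Lemma F0_compact p q k : compact (F0 p q k).
Proof.
elim: k => [|k IH] /=; first exact: segment_compact.
by rewrite /U; repeat apply: compactU;
  apply: continuous_compact => //; apply: continuous_subspaceT; apply: S_cont.
Qed.

Lemma attr_exists p q : 0 < p < 1/16 -> 0 < q < 1/16 ->
  exists K, is_attractor p q K.
Proof.
move=> hp hq.
have mono : forall k l, (k <= l)%N -> F0 p q l `<=` F0 p q k.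
  move=> k l /subnK <-; elim: (l - k)%N => // d IH.
  by rewrite addSn; apply: subset_trans (@F0_dec p q _ hp hq) IH.
exists (\bigcap_(k in setT) F0 p q k); split; [|split].
- apply: (@subclosed_compact _ _ `[(0:R), 1]%classic); last 2 first.
  + exact: segment_compact.
  + by move=> x Kx; apply: (Kx 0%N I).
  + apply: closed_bigI => k _; apply: compact_closed; first exact: norm_hausdorff.
    exact: F0_compact.
- exists 0 => k _; elim: k => [|k IH]; first by apply/itv01; lra.
  by left; left; left; exists 0 => //=; rewrite mulr0.
- apply/seteqP; split; last first.
    move=> x Ux k _; apply: (@F0_dec p q _ hp hq); apply: (@U_mono p q (\bigcap_(k in setT) F0 p q k) (F0 p q k) _ x Ux).
    by move=> y Ky; apply: Ky.
  move=> x Kx.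
  suff [i Hi] : exists i, forall k, exists y, F0 p q k y /\ S p q i y = x.
    have [y [_ Hy]] := Hi 0%N.
    have Ky : (\bigcap_(k in setT) F0 p q k) y.
      move=> k _; have [z [Fz Hz]] := Hi k.
      by have <- := @S_inj p q i (proj1 (andP hp)) (proj1 (andP hq)) _ _ (etrans Hz (esym Hy)).
    by case: i Hi Hy => _ <-; [left; left; left|left; left; right|left; right|right];
      exists y.
  apply: contrapT => /forallNP H.
  have G : forall i, exists k, forall y, F0 p q k y -> S p q i y <> x.
    move=> i; have /existsNP [k Hk] := H i; exists k => y Fy Sy.
    by apply: Hk; exists y.
  have [k1 H1] := G s1; have [k2 H2] := G s2.
  have [k3 H3] := G s3; have [k4 H4] := G s4.
  pose k := (k1 + k2 + k3 + k4)%N.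
  have := Kx k.+1 I; rewrite /= => -[[[|]|]|] [y Fy Sy].
  + by apply: (H1 y) => //; apply: (mono _ k) => //; rewrite /k; lia.
  + by apply: (H2 y) => //; apply: (mono _ k) => //; rewrite /k; lia.
  + by apply: (H3 y) => //; apply: (mono _ k) => //; rewrite /k; lia.
  + by apply: (H4 y) => //; apply: (mono _ k) => //; rewrite /k; lia.
Qed.

Lemma attr_S p q K i y : is_attractor p q K -> K y -> K (S p q i y).
Proof.
move=> [_ [_ eK]] Ky; rewrite eK.
by case: i; [left; left; left|left; left; right|left; right|right]; exists y.
Qed.

Lemma Kpq_attr p q : 0 < p < 1/16 -> 0 < q < 1/16 -> is_attractor p q (Kpq p q).
Proof. by move=> hp hq; rewrite /Kpq; apply: xgetPex; exact: attr_exists. Qed.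

Lemma Scomp_in p q K s k y : is_attractor p q K -> K y -> K (Scomp p q s k y).
Proof. by move=> aK; elim: k y => [|k IH] y Ky //=; apply: IH; apply: attr_S. Qed.

Lemma Scomp_shift p q s k y :
  Scomp p q s k.+1 y = S p q (s 0%N) (Scomp p q (fun n => s n.+1) k y).
Proof.
elim: k y => [|k IH] y //.
have -> : Scomp p q s k.+2 y = Scomp p q s k.+1 (S p q (s k.+1) y) by [].
by rewrite IH.
Qed.

Lemma Scomp_lip p q s k u v : 0 < p < 1/16 -> 0 < q < 1/16 ->
  `|Scomp p q s k u - Scomp p q s k v| <= (1/16) ^+ k * `|u - v|.
Proof.
move=> hp hq; elim: k u v => [|k IH] u v /=; first by rewrite expr0 mul1r.
apply: (le_trans (IH _ _)); rewrite exprS -mulrA mulrCA; apply: ler_wpM2l; first by apply: exprn_ge0; lra.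
have -> : S p q (s k) u - S p q (s k) v = rt p q (s k) * (u - v) by rewrite !SE; ring.
rewrite normrM; apply: ler_wpM2r => //.
by case: (s k) => /=; rewrite ger0_norm; lra.
Qed.

Definition Xs p q s := [set x : R | forall k, (Scomp p q s k @` Kpq p q) x].

Lemma Xs_ne p q s : 0 < p < 1/16 -> 0 < q < 1/16 -> exists x, Xs p q s x.
Proof.
move=> hp hq; have aK := Kpq_attr _ _ hp hq; have [cK [[y0 Ky0] _]] := aK.
apply: (@nested_inter (Kpq p q) (fun k => Scomp p q s k @` Kpq p q)) => //.
- move=> k; apply: compact_closed; first exact: norm_hausdorff.
  apply: continuous_compact => //; apply: continuous_subspaceT; apply: Scomp_cont.
- by move=> k x [y Ky <-]; apply: Scomp_in.
- move=> k x [y Ky <-]; exists (S p q (s k) y) => //; exact: attr_S.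
- by move=> k; exists (Scomp p q s k y0); exists y0.
Qed.

Lemma Xs_uniq p q s a b : 0 < p < 1/16 -> 0 < q < 1/16 ->
  Xs p q s a -> Xs p q s b -> a = b.
Proof.
move=> hp hq Xa Xb; have aK := Kpq_attr _ _ hp hq.
suff : `|a - b| <= 0 by rewrite normr_le0 subr_eq0 => /eqP.
apply: (@geo_limit _ _ 1) => // k.
have [u Ku <-] := Xa k; have [v Kv <-] := Xb k.
apply: (le_trans (Scomp_lip _ _ _ _ _ _ hp hq)); rewrite add0r mul1r.
have /andP[u0 u1] := attr_bound _ _ _ hp hq aK _ Ku.
have /andP[v0 v1] := attr_bound _ _ _ hp hq aK _ Kv.
have h1 : `|u - v| <= 1 by rewrite ler_norml; apply/andP; split; lra.
have h2 : 0 <= 16^-1 ^+ k :> R by apply: exprn_ge0; rewrite invr_ge0.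
nra.
Qed.

Lemma pi_X p q s : 0 < p < 1/16 -> 0 < q < 1/16 -> Xs p q s (pi_pq p q s).
Proof. by move=> hp hq; rewrite /pi_pq; apply: xgetPex; exact: Xs_ne. Qed.

Lemma pi_K p q s : 0 < p < 1/16 -> 0 < q < 1/16 -> Kpq p q (pi_pq p q s).
Proof. by move=> hp hq; have [y Ky <-] := pi_X _ _ s hp hq 0%N. Qed.

Lemma pi_01 p q s : 0 < p < 1/16 -> 0 < q < 1/16 -> 0 <= pi_pq p q s <= 1.
Proof. by move=> hp hq; apply: (attr_bound _ _ _ hp hq (Kpq_attr _ _ hp hq)); apply: pi_K. Qed.

Lemma pi_shift p q s : 0 < p < 1/16 -> 0 < q < 1/16 ->
  pi_pq p q s = S p q (s 0%N) (pi_pq p q (fun n => s n.+1)).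
Proof.
move=> hp hq; apply: (Xs_uniq _ _ _ _ _ hp hq); first exact: pi_X.
case=> [|k].
  exists (S p q (s 0%N) (pi_pq p q (fun n => s n.+1))) => //.
  by apply: attr_S; [exact: Kpq_attr|exact: pi_K].
have [y Ky Hy] := pi_X _ _ (fun n => s n.+1) hp hq k.
by exists y => //; rewrite Scomp_shift Hy.
Qed.

Lemma pi_lip p q q' s : 0 < p < 1/16 -> 0 < q < 1/16 -> 0 < q' < 1/16 ->
  `|pi_pq p q s - pi_pq p q' s| <= 16/15 * `|q - q'|.
Proof.
move=> hp hq hq'.
have d0 : 0 <= `|q - q'| by [].
apply: (@geo_limit _ _ 1) => //.
move=> k; elim: k s => [|k IH] s.
  have /andP[a0 a1] := pi_01 _ _ s hp hq; have /andP[b0 b1] := pi_01 _ _ s hp hq'.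
  rewrite expr0 mulr1; have : `|pi_pq p q s - pi_pq p q' s| <= 1.
    by rewrite ler_norml; apply/andP; split; lra.
  lra.
rewrite (pi_shift _ _ s hp hq) (pi_shift _ _ s hp hq').
apply: (le_trans (Sdiff _ _ _ _ _ _ hp hq hq' (pi_01 _ _ _ hp hq) (pi_01 _ _ _ hp hq'))).
have := IH (fun n => s n.+1); rewrite exprS.
have : 0 <= (1/16 : R) ^+ k by apply: exprn_ge0; lra.
lra.
Qed.

Lemma iter_S1 p q m z : iter m (S p q s1) z = p ^+ m * z.
Proof. by elim: m => [|m IH] /=; rewrite ?expr0 ?mul1r // IH exprS mulrA. Qed.

Lemma iter_S2 p q n z : iter n (S p q s2) z = q ^+ n * z.
Proof. by elim: n => [|n IH] /=; rewrite ?expr0 ?mul1r // IH exprS mulrA. Qed.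

Lemma powdiff (a b : R) n : 0 <= a -> a <= b ->
  (b - a) * b ^+ n <= b ^+ n.+1 - a ^+ n.+1.
Proof.
move=> a0 ab; elim: n => [|n IH]; first by rewrite !expr1 expr0 mulr1.
have ha : 0 <= a ^+ n.+1 by apply: exprn_ge0.
have hba : 0 <= (b - a) * a ^+ n.+1 by apply: mulr_ge0; lra.
have hb : 0 <= b by lra.
have := ler_wpM2l hb IH.
move: IH; rewrite [b ^+ n.+2]exprS [a ^+ n.+2]exprS [b ^+ n.+1]exprS => IH.
nra.
Qed.

Lemma bigpow (P b : R) n : 0 < P -> 0 < b < 1/16 -> 15/16 * P <= b ^+ n.+1 ->
  15 * P < b ^+ n.
Proof.
move=> P0 hb; rewrite exprS => h.
have : 0 <= b ^+ n by apply: exprn_ge0; lra.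
nra.
Qed.

Lemma core (P q q' u u' v v' : R) n : 0 < P -> 0 < q < 1/16 -> 0 < q' < 1/16 ->
  q != q' ->
  15/16 * P <= q ^+ n.+1 <= 16/15 * P -> 15/16 * P <= q' ^+ n.+1 <= 16/15 * P ->
  `|u - u'| <= 16/15 * `|q - q'| -> `|v - v'| <= 16/15 * `|q - q'| ->
  15/16 <= v' <= 1 ->
  11 * P * `|q - q'| <
  `|P * u - q ^+ n.+1 * v - P * u' + q' ^+ n.+1 * v'|.
Proof.
move=> P0 hq hq' nqq /andP[Q1 Q2] /andP[Q1' Q2'] hu hv /andP[v1 v2].
set d := `|q - q'|.
have d0 : 0 < d by rewrite normr_gt0 subr_eq0.
set Q := q ^+ n.+1; set Q' := q' ^+ n.+1.
have hQQ : 15 * P * d < `|Q - Q'|.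
  case: (ltgtP q q') => [lt|gt|eq]; last by rewrite eq eqxx in nqq.
  - have e1 : d = q' - q by rewrite /d distrC ger0_norm // subr_ge0 ltW.
    have e2 : `|Q - Q'| = Q' - Q.
      rewrite distrC ger0_norm // subr_ge0 /Q /Q' lerXn2r //; try lra.
      by rewrite nnegrE; lra. by rewrite nnegrE; lra.
    have := powdiff _ _ n (ltW (proj1 (andP hq))) (ltW lt).
    have := bigpow _ _ n P0 hq' Q1'.
    rewrite e1 e2 -/Q -/Q'; nra.
  - have e1 : d = q - q' by rewrite /d ger0_norm // subr_ge0 ltW.
    have e2 : `|Q - Q'| = Q - Q'.
      rewrite ger0_norm // subr_ge0 /Q /Q' lerXn2r //; try lra.
      by rewrite nnegrE; lra. by rewrite nnegrE; lra.
    have := powdiff _ _ n (ltW (proj1 (andP hq'))) (ltW gt).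
    have := bigpow _ _ n P0 hq Q1.
    rewrite e1 e2 -/Q -/Q'; nra.
have eX : `|(Q - Q') * v'| = `|Q - Q'| * v' by rewrite normrM (ger0_norm (x := v')) //; lra.
have hX : 15 * P * d * (15/16) < `|(Q - Q') * v'|.
  rewrite eX; have := normr_ge0 (Q - Q'); nra.
have hY : `|Q * (v - v')| <= 16/15 * P * (16/15 * d).
  have Q0 : 0 <= Q by rewrite /Q exprn_ge0 //; lra.
  by rewrite normrM (ger0_norm Q0); apply: ler_pM.
have hZ : `|P * (u - u')| <= P * (16/15 * d).
  rewrite normrM (gtr0_norm P0); apply: ler_wpM2l => //; lra.
have -> : P * u - Q * v - P * u' + Q' * v' =
  P * (u - u') - (Q - Q') * v' - Q * (v - v') by ring.
set Z := P * (u - u'); set X := (Q - Q') * v'; set Y := Q * (v - v').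
have tri : `|X| <= `|Z - X - Y| + `|Y| + `|Z|.
  have e : X = Z - (Z - X - Y) - Y by ring.
  rewrite {1}e; apply: (le_trans (ler_normB _ _)).
  have := ler_normB Z (Z - X - Y); lra.
have hw : 0 < P * d by apply: mulr_gt0.
move: tri hX hY hZ; rewrite -/X -/Y -/Z.
lra.
Qed.

End Work.

Theorem lemma16 (R : realType) (p : R) (m n : nat) (i j : I4) :
  0 < p < 1/16 -> (0 < m)%N -> (0 < n)%N ->
  (i = s3 \/ i = s4) -> (j = s3 \/ j = s4) ->
  forall (sigma tau : nat -> I4) (q q' : R),
    Dmn m n p q -> Dmn m n p q' -> q != q' ->
    11 * p ^+ m * `|q' - q| <
    `|phi1 p m i q sigma - phi2 p n j q tau - phi1 p m i q' sigma + phi2 p n j q' tau|.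
Proof.
move=> hp hm hn hi hj sigma tau q q' [hq Dq] [hq' Dq'] nqq.
case: n hn Dq Dq' => // n _ Dq Dq'.
have P0 : 0 < p ^+ m by apply: exprn_gt0; lra.
rewrite /phi1 /phi2 (iter_S1 _ p q) (iter_S1 _ p q') (iter_S2 _ p q) (iter_S2 _ p q') distrC.
have conv : forall x : R, 15/16 <= x / p ^+ m <= 16/15 ->
    15/16 * p ^+ m <= x <= 16/15 * p ^+ m.
  move=> x /andP[h1 h2]; apply/andP; split.
    by rewrite -ler_pdivlMr.
  by rewrite -ler_pdivrMr.
have dd : forall k, `|S p q k (pi_pq p q sigma) - S p q' k (pi_pq p q' sigma)|
    <= 16/15 * `|q - q'|.
  move=> k; apply: (le_trans (Sdiff _ _ _ _ _ _ _ hp hq hq' (pi_01 _ _ _ _ hp hq) (pi_01 _ _ _ _ hp hq'))).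
  have := pi_lip _ _ _ _ sigma hp hq hq'; lra.
have dd' : forall k, `|S p q k (pi_pq p q tau) - S p q' k (pi_pq p q' tau)|
    <= 16/15 * `|q - q'|.
  move=> k; apply: (le_trans (Sdiff _ _ _ _ _ _ _ hp hq hq' (pi_01 _ _ _ _ hp hq) (pi_01 _ _ _ _ hp hq'))).
  have := pi_lip _ _ _ _ tau hp hq hq'; lra.
apply: core => //; try exact: conv.
apply/andP; split; first exact: S_gt (pi_01 _ _ _ _ hp hq') hj.
by have /andP[] := S01 _ _ _ j _ hp hq' (pi_01 _ _ _ tau hp hq').
Qed.
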